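(* Let $m\ge 1$, $n=2m$, let $\beta$ be a primitive element of $\mathbb{F}_{2^m}$, let $U$ be the (unique) subgroup of $\mathbb{F}_{2^n}^*$ of order $2^m+1$, and let $\Delta=\{1,\beta,\beta^2,\ldots,\beta^{2^{m-1}-1}\}$. Let $f:\mathbb{F}_{2^n}\to\mathbb{F}_2$ be the Boolean function with support $\mathrm{Supp}(f)=\{yz: y\in\Delta,\ z\in U\}$. Then $f$ has optimal algebraic immunity, i.e. $\mathrm{AI}(f)=m$.
   Context: A Boolean function in $n$ variables is identified with a map $f:\mathbb{F}_{2^n}\to\mathbb{F}_2$ (via a fixed $\mathbb{F}_2$-basis, $\mathbb{F}_{2^n}\cong\mathbb{F}_2^n$); its support is $\mathrm{Supp}(f)=\{x: f(x)=1\}$ and its algebraic degree $\deg(f)$ is the degree of its algebraic normal form (equivalently, if $f(x)=\sum_{i=0}^{2^n-1}f_ix^i$, then $\deg f=\max\{\mathrm{wt}_n(i): f_i\ne0\}$, with $\mathrm{wt}_n(2^n-1)=n$). A function $g$ is an annihilator of $f$ if $fg=0$. The algebraic immunity is $\mathrm{AI}(f)=\min\{\deg(g): g\neq 0,\ fg=0\text{ or }(f+1)g=0\}$; it always satisfies $\mathrm{AI}(f)\le\lceil n/2\rceil$, and $f$ is said to have optimal algebraic immunity if equality holds. Since $\gcd(2^m-1,2^m+1)=1$, every $x\in\mathbb{F}_{2^n}^*$ is uniquely written as $x=yz$ with $y\in\mathbb{F}_{2^m}^*$, $z\in U$. *)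

(* Defs.v *)
From HB Require Import structures.
From mathcomp Require Import all_boot all_order all_algebra all_field.
Set Implicit Arguments. Unset Strict Implicit. Unset Printing Implicit Defensive.
Import GRing.Theory.
Local Open Scope ring_scope.

(* Hamming weight of the binary expansion of i (number of ones). Bits at
   positions >= i are zero, so summing over k < i suffices. *)
Definition wt (i : nat) : nat := (\sum_(k < i) odd (i %/ 2 ^ k))%N.

Definition boolfun (F : finFieldType) := F -> bool.

(* Algebraic degree <= d : the (unique) univariate representation
   f(x) = sum_{i=0}^{|F|-1} f_i x^i only has nonzero coefficients f_i with
   wt(i) <= d. *)
Definition alg_deg_le (F : finFieldType) (f : boolfun F) (d : nat) : Prop :=
  exists c : 'I_#|F| -> F,
    (forall i : 'I_#|F|, (d < wt i)%N -> c i = 0) /\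
    (forall x : F, (f x)%:R = \sum_(i < #|F|) c i * x ^+ i).

Definition nonzero_bf (F : finFieldType) (g : boolfun F) : Prop :=
  exists x, g x.

Definition annihilates (F : finFieldType) (g f : boolfun F) : Prop :=
  forall x, f x && g x = false.

Definition AI_candidate (F : finFieldType) (f g : boolfun F) : Prop :=
  nonzero_bf g /\ (annihilates g f \/ annihilates g (fun x => ~~ f x)).

Definition alg_immunity_eq (F : finFieldType) (f : boolfun F) (k : nat) : Prop :=
  (exists g, AI_candidate f g /\ alg_deg_le g k) /\
  (forall g d, AI_candidate f g -> alg_deg_le g d -> (k <= d)%N).

(* Main.v *)
Require Import Defs.
From HB Require Import structures.
From mathcomp Require Import all_boot all_order all_algebra all_field.
From mathcomp Require Import cyclic zify ring.
Import GRing.Theory.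
Set Warnings "-notation-overridden -ambiguous-paths".

Definition wtL (L i : nat) : nat := (\sum_(k < L) odd (i %/ 2 ^ k))%N.

Lemma wtL_le L i : (wtL L i <= L)%N.
Proof.
rewrite /wtL -[X in (_ <= X)%N]card_ord -sum1_card.
by apply: leq_sum => k _; apply: leq_b1.
Qed.

Lemma wtL_ext L e i : (i < 2 ^ L)%N -> wtL (L + e) i = wtL L i.
Proof.
move=> hi; rewrite /wtL big_split_ord /= [X in (_ + X)%N]big1 ?addn0 //.
move=> k _; rewrite divn_small //; apply: leq_trans hi _.
by rewrite leq_exp2l // leq_addr.
Qed.

Lemma wt_wtL L i : (i < 2 ^ L)%N -> wt i = wtL L i.
Proof.
move=> hi; rewrite /wt -/(wtL i i).
have hii : (i < 2 ^ i)%N by apply: ltn_expl.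
case: (leqP L i) => h.
  by rewrite -{1}(subnKC h) wtL_ext.
by rewrite -(subnKC (ltnW h)) wtL_ext.
Qed.

Lemma wtL_split L1 L2 a b : (a < 2 ^ L1)%N ->
  wtL (L1 + L2) (a + 2 ^ L1 * b) = (wtL L1 a + wtL L2 b)%N.
Proof.
move=> ha; rewrite /wtL big_split_ord /=; congr addn.
  apply: eq_bigr => k _ /=.
  have hk : (k < L1)%N := ltn_ord k.
  have -> : (2 ^ L1 = 2 ^ k * 2 ^ (L1 - k))%N by rewrite -expnD subnKC // ltnW.
  rewrite -mulnA addnC mulnC divnMDl ?expn_gt0 //.
  rewrite oddD oddM oddX /=.
  by rewrite subn_eq0 leqNgt hk.
apply: eq_bigr => k _ /=.
rewrite expnD divnMA [X in X %/ 2 ^ L1]addnC [_ * b]mulnC divnMDl ?expn_gt0 //.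
by rewrite (divn_small ha) addn0.
Qed.

Lemma wtL_compl L a : (a < 2 ^ L)%N -> wtL L (2 ^ L - 1 - a) = (L - wtL L a)%N.
Proof.
elim: L a => [|L IH] a ha.
  by rewrite /wtL !big_ord0.
have ha' : (a %/ 2 < 2 ^ L)%N by rewrite ltn_divLR // mulnC -expnS.
have e1 : a = (a %% 2 + 2 ^ 1 * (a %/ 2))%N by rewrite addnC mulnC -divn_eq.
have e2 : (2 ^ L.+1 - 1 - a = (1 - a %% 2) + 2 ^ 1 * (2 ^ L - 1 - a %/ 2))%N.
  rewrite {1}e1 expnS.
  have := ltn_pmod a (isT : (0 < 2)%N). move: ha'. 
  move: (a %% 2) (a %/ 2) (2 ^ L) => x y z; lia.
have hm : (a %% 2 < 2 ^ 1)%N by rewrite ltn_pmod.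
have h1 : (1 - a %% 2 < 2 ^ 1)%N by rewrite expn1; lia.
have s1 := @wtL_split 1 L _ (2 ^ L - 1 - a %/ 2) h1.
have s2 := @wtL_split 1 L _ (a %/ 2) hm.
rewrite -e1 in s2.
rewrite e2 [L.+1]/(1 + L)%N s1 s2 IH //.
have w1 : forall x, (x < 2)%N -> wtL 1 x = x.
  by move=> x hx; rewrite /wtL big_ord1 expn0 divn1; case: x hx => [|[|]].
have hm2 : (a %% 2 < 2)%N by rewrite ltn_pmod.
have := wtL_le L (a %/ 2).
rewrite (w1 (a %% 2)) // (w1 (1 - a %% 2)); last lia.
move: (a %% 2) (wtL L (a %/ 2)) hm2 => x y; lia.
Qed.


Lemma coprimeKM m : (1 <= m)%N -> coprime (2 ^ m - 1) (2 ^ m + 1).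
Proof.
move=> hm.
have -> : (2 ^ m + 1 = 1 * (2 ^ m - 1) + 2)%N.
  have : (1 <= 2 ^ m)%N by rewrite expn_gt0.
  lia.
rewrite /coprime gcdnMDl -/(coprime _ 2) coprimen2.
rewrite oddB ?expn_gt0 // oddX /=.
by case: m hm.
Qed.

Lemma KM_eq m n : n = (2 ^ (2 * m))%N -> ((2 ^ m - 1) * (2 ^ m + 1) = n - 1)%N.
Proof.
move=> ->; rewrite mulnC expnM -[(2 ^ 2)%N]/(2 * 2)%N expnMn.
have : (1 <= 2 ^ m)%N by rewrite expn_gt0.
move: (2 ^ m)%N => p hp; nia.
Qed.

Lemma crt_mod K M i i' : coprime K M -> i %% K = i' %% K -> i %% M = i' %% M ->
  i = i' %[mod K * M].
Proof.
move=> co h1 h2; apply/eqP; rewrite chinese_remainder //.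
by rewrite h1 h2 !eqxx.
Qed.

Lemma mod_uniq1 N i i' : (0 < i <= N)%N -> (0 < i' <= N)%N -> i = i' %[mod N] -> i = i'.
Proof.
wlog le : i i' / (i' <= i)%N.
  move=> W h1 h2 e; case: (leqP i' i) => h; first exact: W.
  by symmetry; apply: W => //; apply: ltnW.
move=> /andP [h1 h2] /andP [h3 h4] /eqP e.
rewrite eqn_mod_dvd // in e.
case: (posnP (i - i')) => h; first lia.
have := dvdn_leq h e; lia.
Qed.

Definition phin (p i : nat) : nat := (p - 1 - i %/ p + p * (p - 1 - i %% p))%N.

Lemma phin_lt p i : (0 < p)%N -> (phin p i < p * p)%N.
Proof.
move=> hp; rewrite /phin.
have : (p * (p - 1 - i %% p) <= p * (p - 1))%N by rewrite leq_mul2l leq_subr orbT.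
move: (p * (p - 1 - i %% p))%N => x; nia.
Qed.

Lemma phin_dec p i : (0 < p)%N -> (i < p * p)%N ->
  (phin p i) %% p = (p - 1 - i %/ p)%N /\ (phin p i) %/ p = (p - 1 - i %% p)%N.
Proof.
move=> hp hi; have hb : (i %/ p < p)%N by rewrite ltn_divLR.
rewrite /phin; split.
  by rewrite addnC mulnC modnMDl modn_small //; move: (i %/ p)%N => x; lia.
by rewrite [(_ + _)%N]addnC mulnC divnMDl // divn_small ?addn0 //; move: (i %/ p)%N => x; lia.
Qed.

Lemma phin_invol p i : (0 < p)%N -> (i < p * p)%N -> phin p (phin p i) = i.
Proof.
move=> hp hi; have [e1 e2] := @phin_dec p i hp hi.
rewrite {1}/phin e1 e2.
have hb : (i %/ p < p)%N by rewrite ltn_divLR.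
have ha : (i %% p < p)%N by rewrite ltn_pmod.
rewrite {3}(divn_eq i p).
move: (i %/ p)%N (i %% p)%N hb ha => b a hb ha.
have -> : (p - 1 - (p - 1 - a) = a)%N by lia.
have -> : (p - 1 - (p - 1 - b) = b)%N by lia.
by rewrite mulnC addnC.
Qed.

Lemma phin_modM p i : (0 < p)%N -> (i < p * p)%N -> (phin p i) %% (p + 1) = i %% (p + 1).
Proof.
move=> hp hi; apply/eqP.
set y := (i %/ p + p * (i %% p))%N.
rewrite -(eqn_modDr y).
have hb : (i %/ p < p)%N by rewrite ltn_divLR.
have ha : (i %% p < p)%N by rewrite ltn_pmod.
have -> : (phin p i + y = (p - 1) * (p + 1))%N.
  rewrite /phin /y; move: (i %/ p)%N (i %% p)%N hb ha => b a hb ha; nia.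
have -> : (i + y = (i %% p + i %/ p) * (p + 1))%N.
  rewrite /y {1}(divn_eq i p); move: (i %/ p)%N (i %% p)%N => b a; nia.
by rewrite !modnMl.
Qed.

Lemma phin_neq0 p i : (0 < p)%N -> (i < p * p)%N -> i != (p * p - 1)%N -> phin p i != 0%N.
Proof.
move=> hp hi; apply: contra => /eqP h.
have hb : (i %/ p < p)%N by rewrite ltn_divLR.
have ha : (i %% p < p)%N by rewrite ltn_pmod.
move: h; rewrite /phin {3}(divn_eq i p).
move: (i %/ p)%N (i %% p)%N hb ha => b a hb ha.
move/eqP; rewrite addn_eq0 muln_eq0 => /andP [/eqP h1 /orP [/eqP h2|/eqP h2]]; first lia.
apply/eqP; nia.
Qed.

Lemma wt_phin m i : (i < 2 ^ (2 * m))%N ->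
  wt (phin (2 ^ m) i) = (2 * m - wt i)%N.
Proof.
move=> hi.
have hp : (0 < 2 ^ m)%N by rewrite expn_gt0.
have hpp : (2 ^ (2 * m) = 2 ^ m * 2 ^ m)%N by rewrite mul2n -addnn expnD.
rewrite hpp in hi.
have hb : (i %/ 2 ^ m < 2 ^ m)%N by rewrite ltn_divLR.
have ha : (i %% 2 ^ m < 2 ^ m)%N by rewrite ltn_pmod.
rewrite (@wt_wtL (2 * m)); last by rewrite hpp phin_lt.
rewrite (@wt_wtL (2 * m)); last by rewrite hpp.
rewrite mul2n -addnn {1}/phin wtL_split; last by move: (i %/ 2 ^ m)%N hp => x; lia.
have s := @wtL_split m m (i %% 2 ^ m) (i %/ 2 ^ m) ha.
have ei : (i %% 2 ^ m + 2 ^ m * (i %/ 2 ^ m) = i)%N by rewrite addnC mulnC -divn_eq.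
rewrite ei in s; rewrite s.
rewrite !wtL_compl //.
have := wtL_le m (i %/ 2 ^ m); have := wtL_le m (i %% 2 ^ m); lia.
Qed.


Lemma CL m n (s : nat) : (1 <= m)%N -> n = (2 ^ (2 * m))%N ->
  (#|[set i : 'I_n | (i %% (2 ^ m + 1) == s) && (wt i < m)%N
        && (i != 0%N :> nat) && (i != (n - 1)%N :> nat)]| <= 2 ^ (m - 1) - 1)%N.
Proof.
move=> hm hn.
set S := [set i : 'I_n | _].
have hp : (0 < 2 ^ m)%N by rewrite expn_gt0.
have hpp : n = (2 ^ m * 2 ^ m)%N by rewrite hn mul2n -addnn expnD.
have PH : forall i : nat, (phin (2 ^ m) i < n)%N.
  by move=> i; rewrite hpp phin_lt.
pose phio (i : 'I_n) : 'I_n := Ordinal (PH i).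
have inj : injective phio.
  move=> i j /(congr1 val) /= e.
  have hi : (i < 2 ^ m * 2 ^ m)%N by rewrite -hpp.
  have hj : (j < 2 ^ m * 2 ^ m)%N by rewrite -hpp.
  apply: val_inj => /=.
  by rewrite -(@phin_invol _ _ hp hi) e (@phin_invol _ _ hp hj).
pose C := [set i : 'I_n | (i %% (2 ^ m + 1) == s) && (i != 0%N :> nat)].
have sub1 : S \subset C.
  by apply/subsetP => i; rewrite !inE => /andP [/andP [/andP [-> _] ->] _].
have sub2 : phio @: S \subset C.
  apply/subsetP => j /imsetP [i]; rewrite !inE => /andP [/andP [/andP [h1 _] _] h4] ->.
  have hi : (i < 2 ^ m * 2 ^ m)%N by rewrite -hpp.
  rewrite /= phin_modM // h1 /=.
  by apply: phin_neq0 => //; rewrite -hpp.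
have disj : S :&: phio @: S = set0.
  apply/setP => j; rewrite !inE.
  apply/negbTE; apply/negP => /andP [/andP [/andP [/andP [_ hw] _] _] /imsetP [i]].
  rewrite !inE => /andP [/andP [/andP [_ hw'] _] _] ej.
  move: hw; rewrite ej /= wt_phin; last by rewrite -hn.
  lia.
have cU : (#|S| + #|phio @: S| <= #|C|)%N.
  rewrite -cardsUI disj cards0 addn0.
  by apply: subset_leq_card; rewrite subUset sub1 sub2.
rewrite card_imset // in cU.
have hK : (0 < 2 ^ m - 1)%N by have := ltn_expl m (isT : (1 < 2)%N); lia.
pose f (i : 'I_n) : 'I_(2 ^ m - 1) := Ordinal (ltn_pmod i hK).
have injf : {in C &, injective f}.
  move=> i j; rewrite !inE => /andP [/eqP hi1 hi2] /andP [/eqP hj1 hj2] /(congr1 val) /= e.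
  apply: val_inj => /=.
  have := @crt_mod _ _ _ _ (@coprimeKM _ hm) e (etrans hi1 (esym hj1)).
  rewrite (@KM_eq _ _ hn) => ee.
  apply: (@mod_uniq1 _ _ _ _ _ ee).
    by rewrite lt0n hi2 /=; have := ltn_ord i; clear; lia.
  by rewrite lt0n hj2 /=; have := ltn_ord j; clear; lia.
have cC : (#|C| <= 2 ^ m - 1)%N.
  by rewrite -(card_in_imset injf); apply: leq_trans (max_card _) _; rewrite card_ord.
have e2 : (2 ^ m = 2 * 2 ^ (m - 1))%N by rewrite -expnS; congr expn; lia.
clear -cU cC e2; move: (2 ^ m)%N (2 ^ (m - 1))%N #|S| #|C| cU cC e2 => a b c d; lia.
Qed.

Local Open Scope ring_scope.

Lemma VL (F : fieldType) (I : finType) (A : {set I}) (a d : I -> F) (j0 : nat) :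
  {in A &, injective a} -> (forall k, k \in A -> a k != 0) ->
  (forall j, (j < #|A|)%N -> \sum_(k in A) d k * a k ^+ (j0 + j) = 0) ->
  forall l, l \in A -> d l = 0.
Proof.
move=> inj nz H l lA.
pose P := \prod_(k in A | k != l) ('X - (a k)%:P).
have szP : (size P <= #|A|)%N.
  apply: leq_trans (size_poly_prod_leq _ _) _.
  rewrite (eq_bigr (fun _ => 2%N)); last by move=> k _; rewrite size_XsubC.
  rewrite sum_nat_const (cardD1 l A) lA /=.
  rewrite (@eq_card _ _ [predD1 A & l]); last by move=> k; rewrite !inE andbC.
  move: #|[predD1 A & l]| => c; lia.
have key : \sum_(j < size P) P`_j * (\sum_(k in A) d k * a k ^+ (j0 + j))
           = d l * a l ^+ j0 * P.[a l].
  rewrite (eq_bigr (fun j : 'I_(size P) => \sum_(k in A) d k * a k ^+ j0 * (P`_j * a k ^+ j))); last first.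
    move=> j _; rewrite mulr_sumr; apply: eq_bigr => k _.
    by rewrite exprD; ring.
  rewrite exchange_big /= (bigD1 l) //= [X in _ + X = _]big1 ?addr0.
    by rewrite -mulr_sumr horner_coef.
  move=> k /andP[kA kl]; rewrite -mulr_sumr -horner_coef.
  rewrite horner_prod (bigD1 k) /=; last by rewrite kA.
  by rewrite !hornerE subrr /= mulr0 mul0r.
have : d l * a l ^+ j0 * P.[a l] = 0.
  rewrite -key big1 // => j _.
  by rewrite H ?mulr0 //; apply: leq_trans (ltn_ord j) szP.
rewrite horner_prod.
move/eqP; rewrite !mulf_eq0 expf_eq0 (negbTE (nz l lA)) andbF orbF.
case/orP=> [/eqP //|].
rewrite prodf_seq_eq0 => /hasP [k _ /andP [/andP [kA kl]]].
rewrite !hornerE subr_eq0 => /eqP e.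
by move: kl; rewrite (inj _ _ lA kA e) eqxx.
Qed.


Lemma exists_zeta (F : finFieldType) (K M : nat) : #|F| = (K * M).+1 ->
  (0 < K)%N -> (0 < M)%N -> exists z : F, M.-primitive_root z.
Proof.
move=> hF hK hM.
have hKM : (0 < K * M)%N by rewrite muln_gt0 hK hM.
have [g _ hg] : exists2 g, g \in enum (predC1 (0 : F)) & (K * M).-primitive_root g.
  apply/hasP; apply: has_prim_root => //.
- apply/allP => x; rewrite mem_enum /= => nx.
  rewrite unity_rootE; apply/eqP.
  have e : x * x ^+ (K * M) = x * 1 by rewrite mulr1 -exprS -hF expf_card.
  exact: (mulfI nx e).
- exact: enum_uniq.
- by rewrite -cardE cardC1 hF.
exists (g ^+ K).
have := exp_prim_root hg K.
by rewrite gcdnMr mulKn.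
Qed.

Lemma wt_top m : wt (2 ^ (2 * m) - 1) = (2 * m)%N.
Proof.
rewrite (@wt_wtL (2 * m)); last by rewrite subn1 prednK ?expn_gt0.
have := @wtL_compl (2 * m) 0 (expn_gt0 _ _).
rewrite subn0 => ->.
have -> : wtL (2 * m) 0 = 0%N by rewrite /wtL big1 // => k _; rewrite div0n.
by rewrite subn0.
Qed.

Lemma prim_neq0 (F : fieldType) (n : nat) (z : F) : (0 < n)%N -> n.-primitive_root z -> z != 0.
Proof.
move=> hn hz; apply/negP => /eqP z0.
have := prim_expr_order hz; rewrite z0 expr0n.
by case: n hn {hz} => // n _ /eqP; rewrite eq_sym oner_eq0.
Qed.


Lemma LB_core (F : finFieldType) (m : nat) (beta zeta : F) (c : 'I_#|F| -> F)
    (J0 L : nat) (excl0 : bool) :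
  (1 <= m)%N -> #|F| = (2 ^ (2 * m))%N ->
  (2 ^ m - 1).-primitive_root beta -> (2 ^ m + 1).-primitive_root zeta ->
  (forall i : 'I_#|F|, (m <= wt i)%N -> c i = 0) ->
  (forall i : 'I_#|F|, excl0 -> nat_of_ord i = 0%N -> c i = 0) ->
  (2 ^ (m - 1) - excl0 <= L)%N ->
  (forall j k, (j < L)%N ->
     \sum_(i < #|F|) c i * (beta ^+ (J0 + j) * zeta ^+ k) ^+ i = 0) ->
  forall i, c i = 0.
Proof.
move=> hm hN hb hz hdeg h0 hL hvan.
have hM : (0 < 2 ^ m + 1)%N by rewrite addn1.
have hK : (0 < 2 ^ m - 1)%N by have := ltn_expl m (isT : (1 < 2)%N); lia.
have bnz : beta != 0 := @prim_neq0 _ _ _ hK hb.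
have znz : zeta != 0 := @prim_neq0 _ _ _ hM hz.
pose pM (i : 'I_#|F|) : 'I_(2 ^ m + 1) := Ordinal (ltn_pmod i hM).
have step1 : forall j (s : 'I_(2 ^ m + 1)), (j < L)%N ->
   \sum_(i | pM i == s) c i * (beta ^+ (J0 + j)) ^+ i = 0.
  move=> j s hj.
  pose D (s : 'I_(2 ^ m + 1)) := \sum_(i | pM i == s) c i * (beta ^+ (J0 + j)) ^+ i.
  apply: (@VL F _ [set: 'I_(2 ^ m + 1)] (fun s => zeta ^+ s) D 0%N) => //.
  - move=> s1 s2 _ _ /eqP; rewrite (eq_prim_root_expr hz) !modn_small // => /eqP e.
    exact: val_inj.
  - by move=> k _; rewrite expf_neq0.
  move=> k hk; apply: etrans (hvan j k hj).
  rewrite (partition_big pM xpredT) //= [LHS](eq_bigl xpredT); last by move=> x; rewrite inE.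
  apply: eq_bigr => t _; rewrite add0n /D mulr_suml.
  apply: eq_bigr => i /eqP <-.
  rewrite exprMn -mulrA; congr (_ * (_ * _)).
  rewrite -!exprM; apply/eqP; rewrite (eq_prim_root_expr hz) /=.
  by rewrite modnMml mulnC.
have hn1 : forall i : 'I_#|F|, (m <= wt i)%N || (i != (#|F| - 1)%N :> nat).
  move=> i; apply/orP; case: (eqVneq (nat_of_ord i) (#|F| - 1)%N) => e; last by right.
  by left; rewrite e hN wt_top; lia.
pose T (s : 'I_(2 ^ m + 1)) := [set i : 'I_#|F| | (pM i == s) && (wt i < m)%N
    && (i != (#|F| - 1)%N :> nat) && ~~ (excl0 && (i == 0%N :> nat))].
have cardT : forall s, (#|T s| <= L)%N.
  move=> s.
  have hF0 : (0 < #|F|)%N by rewrite hN expn_gt0.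
  pose i0 : 'I_#|F| := Ordinal hF0.
  have sub : T s \subset [set i : 'I_#|F| | ((i %% (2 ^ m + 1))%N == s) && (wt i < m)%N
        && (i != 0%N :> nat) && (i != (#|F| - 1)%N :> nat)] :|: [set i | ~~ excl0 && (i == i0)].
    apply/subsetP => i; rewrite !inE => /andP [/andP [/andP [h1 h2] h3] h4].
    case: (eqVneq (nat_of_ord i) 0%N) => e.
      have -> : i == i0 by apply/eqP/val_inj.
      by move: h4; rewrite e eqxx andbT => ->; rewrite orbT.
    rewrite h2 h3 /= andbT; move/eqP: h1 => <-; by rewrite /= eqxx.
  set S' := [set i : 'I_#|F| | _ && _] in sub.
  set Z := [set i : 'I_#|F| | ~~ excl0 && (i == i0)] in sub.
  have h1 := subset_leq_card sub; rewrite cardsU in h1.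
  have h2 : (#|S'| <= 2 ^ (m - 1) - 1)%N := @CL m #|F| s hm hN.
  have h3 : (#|Z| <= ~~ excl0)%N.
    case: (boolP excl0) => hx /=.
      by rewrite (@eq_card0 _ Z) // => i; rewrite inE hx.
    by rewrite (@eq_card _ Z (pred1 i0)) ?card1 // => i; rewrite inE hx.
  have e2 : (1 <= 2 ^ (m - 1))%N by rewrite expn_gt0.
  move: h1 h2 h3 hL e2; move: (#|T s|) (#|S'|) (#|Z|) (#|S' :&: Z|) (2 ^ (m - 1))%N => a1 b1 c1 d1 e1.
  by case: (excl0) => /=; lia.
have step2 : forall s i, i \in T s -> c i = 0.
  move=> s; apply: (@VL F _ (T s) (fun i => beta ^+ i) c J0).
  - move=> i1 i2; rewrite !inE => /andP [/andP [/andP [/eqP h1 _] h3] _].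
    move=> /andP [/andP [/andP [/eqP h2 _] h4] _] /eqP.
    rewrite (eq_prim_root_expr hb) => /eqP e.
    have e' : (i1 %% (2 ^ m + 1) = i2 %% (2 ^ m + 1))%N.
      by move: (congr1 val h1) (congr1 val h2) => /= -> ->.
    have := @crt_mod _ _ _ _ (@coprimeKM _ hm) e e'.
    rewrite (@KM_eq _ _ hN) !modn_small => [ee||]; first exact: val_inj.
      by have := ltn_ord i2; move: h4; clear; lia.
    by have := ltn_ord i1; move: h3; clear; lia.
  - by move=> i _; rewrite expf_neq0.
  move=> j hj.
  have hjL : (j < L)%N by apply: leq_trans hj (cardT s).
  apply: etrans (step1 j s hjL).
  rewrite [RHS](bigID (mem (T s))) /= [X in _ = _ + X]big1 ?addr0.
    rewrite [RHS](eq_bigl (mem (T s))); last first.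
      move=> i /=; case: (boolP (i \in T s)); rewrite ?andbT ?andbF //.
      by rewrite inE => /andP [/andP [/andP [-> _] _] _].
    by apply: eq_bigr => i _; rewrite exprAC.
  move=> i /andP [e]; rewrite inE e /= negb_and => hh.
  rewrite (_ : c i = 0) ?mul0r //.
  case/orP: hh.
    rewrite negb_and => /orP [h|h]; first by apply: hdeg; rewrite leqNgt.
    by move: (hn1 i) h => /orP [/hdeg //|->].
  by rewrite negbK => /andP [x /eqP y]; apply: h0.
move=> i; case: (leqP m (wt i)) => hw; first exact: hdeg.
case: (boolP (excl0 && (i == 0%N :> nat))) => [/andP [e /eqP z]|nz]; first exact: h0.
apply: (step2 (pM i)); rewrite inE eqxx hw /= nz andbT.
by move: (hn1 i); rewrite leqNgt hw.
Qed.


Lemma sum_sqr_pchar (F : fieldType) (I : Type) (r : seq I) (P : pred I) (a : I -> F) :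
  2%N \in [pchar F] -> (\sum_(i <- r | P i) a i) ^+ 2 = \sum_(i <- r | P i) a i ^+ 2.
Proof.
move=> ch.
have h2 : forall u v : F, (u + v) ^+ 2 = u ^+ 2 + v ^+ 2.
  by move=> u v; rewrite sqrrD -mulr_natr (pcharf0 ch) mulr0 addr0.
elim: r => [|x r IH]; first by rewrite !big_nil expr0n.
rewrite !big_cons; case: (P x) => //.
by rewrite h2 IH.
Qed.

Lemma sum_pow2 (F : fieldType) (I : Type) (r : seq I) (P : pred I) (a : I -> F) k :
  2%N \in [pchar F] -> (\sum_(i <- r | P i) a i) ^+ (2 ^ k) = \sum_(i <- r | P i) a i ^+ (2 ^ k).
Proof.
move=> ch; elim: k => [|k IH]; first by rewrite expn0; apply: eq_bigr => i _; rewrite expr1.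
rewrite expnSr exprM IH sum_sqr_pchar //.
by apply: eq_bigr => i _; rewrite exprM.
Qed.

Definition Tr {F : fieldType} (n : nat) (y : F) := \sum_(k < n) y ^+ (2 ^ k).

Lemma Tr_sq (F : finFieldType) (m : nat) (y : F) : (1 <= m)%N -> #|F| = (2 ^ (2 * m))%N ->
  2%N \in [pchar F] -> Tr (2 * m)%N y ^+ 2 = Tr (2 * m)%N y.
Proof.
move=> hm hN ch; rewrite /Tr sum_sqr_pchar //.
have [n' hn'] : exists n', (2 * m)%N = n'.+1 by exists (2 * m - 1)%N; lia.
rewrite hn' in hN *.
rewrite [LHS]big_ord_recr [RHS]big_ord_recl /=.
have -> : (y ^+ (2 ^ n')) ^+ 2 = y by rewrite -exprM -expnSr -hN expf_card.
rewrite expn0 expr1 addrC; congr (_ + _).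
by apply: eq_bigr => k _; rewrite -exprM -expnSr.
Qed.

Lemma Tr01 (F : fieldType) (t : F) : t ^+ 2 = t -> t = 0 \/ t = 1.
Proof.
move=> h.
have : t * (t - 1) == 0 by rewrite mulrBr mulr1 -expr2 h subrr.
rewrite mulf_eq0 subr_eq0 => /orP [/eqP|/eqP]; by [left|right].
Qed.

Lemma Tr0 (F : fieldType) n : Tr n (0 : F) = 0.
Proof. by rewrite /Tr big1 // => k _; rewrite expr0n expn_eq0. Qed.

Lemma Tr_nonzero (F : finFieldType) (m : nat) : (1 <= m)%N -> #|F| = (2 ^ (2 * m))%N ->
  exists t : F, Tr (2 * m)%N t != 0.
Proof.
move=> hm hN.
case: (boolP [exists t : F, Tr (2 * m)%N t != 0]) => [/existsP //|/existsPn H].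
exfalso.
pose Qp : {poly F} := \sum_(k < 2 * m) 'X^(2 ^ k).
have hQ : forall t, Qp.[t] = Tr (2 * m)%N t.
  by move=> t; rewrite /Qp horner_sum; apply: eq_bigr => k _; rewrite hornerXn.
have Q0 : Qp = 0.
  apply: (@roots_geq_poly_eq0 _ _ (enum F)).
  - by apply/allP => t _; rewrite /root hQ; move: (H t); rewrite negbK.
  - exact: enum_uniq.
  rewrite -cardE /Qp.
  apply: (big_ind (fun p : {poly F} => (size p <= #|F|)%N)).
  - by rewrite size_poly0.
  - move=> p q hp hq; apply: leq_trans (size_polyD _ _) _.
    by rewrite geq_max hp hq.
  - move=> k _; rewrite size_polyXn hN ltn_exp2l //.
have [n' hn'] : exists n', (2 * m)%N = n'.+1 by exists (2 * m - 1)%N; lia.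
have : Qp`_1 = 1.
  rewrite /Qp coef_sum hn' big_ord_recl /= coefXn expn0 eqxx big1 ?addr0 //.
  by move=> k _; rewrite coefXn expnS; case: (2 ^ k)%N => [|[|]].
by rewrite Q0 coef0 => /eqP; rewrite eq_sym oner_eq0.
Qed.

Definition rot1n (H e : nat) : nat :=
  if (e < H)%N then (2 * e)%N else (2 * e + 1 - 2 * H)%N.

Lemma rot1n_lt H e : (e < 2 * H)%N -> (rot1n H e < 2 * H)%N.
Proof. rewrite /rot1n; case: ifP => h he; lia. Qed.

Lemma rot1n_pow (F : finFieldType) H e (x : F) : #|F| = (2 * H)%N -> (e < 2 * H)%N ->
  x ^+ (2 * e) = x ^+ (rot1n H e).
Proof.
move=> hF he; rewrite /rot1n; case: ifP => // h.
have -> : (2 * e = (2 * e - 2 * H) + 2 * H)%N by lia.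
rewrite exprD -hF expf_card -exprSr; congr (_ ^+ _); lia.
Qed.

Lemma rot1n_wt L e : (e < 2 * 2 ^ L)%N -> wt (rot1n (2 ^ L) e) = wt e.
Proof.
move=> he; rewrite /rot1n.
have eL : (2 * 2 ^ L = 2 ^ (1 + L))%N by rewrite expnD expn1.
have w10 : wtL 1 0 = 0%N by rewrite /wtL big_ord1 div0n.
have w11 : wtL 1 1 = 1%N by rewrite /wtL big_ord1 divn1.
case: ifP => h.
  rewrite (@wt_wtL (1 + L)); last by rewrite -eL; lia.
  rewrite (@wt_wtL L e) //.
  have := @wtL_split 1 L 0 e (isT : (0 < 2 ^ 1)%N).
  by rewrite add0n expn1 w10 add0n.
have he' : (e - 2 ^ L < 2 ^ L)%N by lia.
rewrite (@wt_wtL (1 + L)); last by rewrite -eL; lia.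
rewrite (@wt_wtL (L + 1) e); last by rewrite addnC -eL.
have := @wtL_split 1 L 1 (e - 2 ^ L) (isT : (1 < 2 ^ 1)%N).
have := @wtL_split L 1 (e - 2 ^ L) 1 he'.
rewrite expn1 muln1 w11.
have -> : (e - 2 ^ L + 2 ^ L = e)%N by lia.
have -> : (1 + 2 * (e - 2 ^ L) = 2 * e + 1 - 2 * 2 ^ L)%N by lia.
by move=> -> ->; rewrite addnC.
Qed.


Definition rotk (H k e : nat) : nat := iter k (rot1n H) e.

Lemma rotk_lt H k e : (e < 2 * H)%N -> (rotk H k e < 2 * H)%N.
Proof. by move=> he; elim: k => //= k IH; apply: rot1n_lt. Qed.

Lemma rotk_pow (F : finFieldType) H k e (x : F) : #|F| = (2 * H)%N -> (e < 2 * H)%N ->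
  x ^+ (e * 2 ^ k) = x ^+ (rotk H k e).
Proof.
move=> hF he; elim: k => [|k IH]; first by rewrite muln1.
rewrite /= -rot1n_pow //; last exact: rotk_lt.
by rewrite expnS mulnCA [in LHS]mulnC [LHS]exprM IH -exprM mulnC.
Qed.

Lemma rotk_wt L k e : (e < 2 * 2 ^ L)%N -> wt (rotk (2 ^ L) k e) = wt e.
Proof.
move=> he; elim: k => //= k IH.
by rewrite rot1n_wt ?IH //; apply: rotk_lt.
Qed.

Lemma trace_rep (F : finFieldType) (m : nat) (v : 'I_#|F| -> F) (lam : F) :
  (1 <= m)%N -> #|F| = (2 ^ (2 * m))%N ->
  (forall e : 'I_#|F|, (m < wt e)%N -> v e = 0) ->
  exists c : 'I_#|F| -> F, (forall e : 'I_#|F|, (m < wt e)%N -> c e = 0) /\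
    forall x, Tr (2 * m)%N (lam * \sum_(e < #|F|) v e * x ^+ e) = \sum_(e < #|F|) c e * x ^+ e.
Proof.
move=> hm hN hv.
have ch : 2%N \in [pchar F] by apply: (card_finPcharP hN).
have hF : #|F| = (2 * 2 ^ (2 * m - 1))%N.
  by rewrite hN -expnS; congr expn; lia.
have rk_lt : forall k (e : 'I_#|F|), (rotk (2 ^ (2 * m - 1)) k e < #|F|)%N.
  move=> k e; have he : (e < 2 * 2 ^ (2 * m - 1))%N by rewrite -hF.
  by move: (@rotk_lt _ k _ he); rewrite -hF.
pose rk k (e : 'I_#|F|) : 'I_#|F| := Ordinal (rk_lt k e).
pose c (e : 'I_#|F|) := \sum_(k < 2 * m) \sum_(e' | rk k e' == e) (lam * v e') ^+ (2 ^ k).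
exists c; split.
  move=> e he; rewrite /c big1 // => k _; rewrite big1 // => e' /eqP ee.
  have he' : (e' < 2 * 2 ^ (2 * m - 1))%N by rewrite -hF.
  have we : wt e' = wt e by rewrite -ee /= rotk_wt.
  by rewrite (hv e') ?mulr0 ?expr0n ?expn_eq0 // we.
move=> x; rewrite /Tr.
transitivity (\sum_(k < 2 * m) \sum_(e < #|F|) (lam * v e) ^+ (2 ^ k) * x ^+ (rk k e)).
  apply: eq_bigr => k _; rewrite mulr_sumr sum_pow2 //; apply: eq_bigr => e _.
  have he : (e < 2 * 2 ^ (2 * m - 1))%N by rewrite -hF.
  by rewrite mulrA exprMn -exprM /= -rotk_pow.
symmetry.
rewrite (eq_bigr (fun e => \sum_(k < 2 * m) \sum_(e' | rk k e' == e) (lam * v e') ^+ (2 ^ k) * x ^+ e)); last first.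
  by move=> e _; rewrite /c mulr_suml; apply: eq_bigr => k _; rewrite mulr_suml.
rewrite exchange_big /=; apply: eq_bigr => k _.
rewrite [RHS](partition_big (rk k) xpredT) //=.
apply: eq_bigr => e _; apply: eq_bigr => e' /eqP ee. by rewrite -ee.
Qed.


Lemma countW (n m : nat) : n = (2 ^ (2 * m))%N ->
  (n <= 2 * #|[set e : 'I_n | (wt e <= m)%N]|)%N.
Proof.
move=> hn.
set W := [set e : 'I_n | _].
pose B := [set e : 'I_n | (m <= wt e)%N].
have sub : (@rev_ord n) @: B \subset W.
  apply/subsetP => e /imsetP [e' ]; rewrite inE => he' ->; rewrite inE /=.
  have h' : (e' < 2 ^ (2 * m))%N by rewrite -hn.
  have -> : (n - e'.+1 = 2 ^ (2 * m) - 1 - e')%N by move: (nat_of_ord e') h' => x hx; rewrite hn; lia.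
  rewrite (@wt_wtL (2 * m)); last by move: (nat_of_ord e') h' => x hx; lia.
  rewrite wtL_compl // -(@wt_wtL (2 * m)) //; lia.
have c1 := subset_leq_card sub; rewrite card_imset in c1; last exact: rev_ord_inj.
have c2 : (n <= #|W :|: B|)%N.
  have cT : #|[set: 'I_n]| = n by rewrite cardsT card_ord.
  rewrite -[X in (X <= _)%N]cT.
  apply: subset_leq_card.
  apply/subsetP => e _; rewrite !inE.
  exact: leq_total.
have c3 : (#|W :|: B| <= #|W| + #|B|)%N by rewrite cardsU leq_subr.
move: c1 c2 c3; move: #|W| #|B| #|W :|: B| => a b d; lia.
Qed.

Lemma linalg (F : finFieldType) (Z : {set F}) (W : {set 'I_#|F|}) :
  (#|Z| < #|W|)%N ->
  exists v : 'I_#|F| -> F, (exists e, v e != 0) /\ (forall e, e \notin W -> v e = 0) /\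
    (forall x, x \in Z -> \sum_(e < #|F|) v e * x ^+ e = 0).
Proof.
move=> hZW.
pose A : 'M[F]_(#|W|, #|Z|) := \matrix_(i, j) ((enum_val j : F) ^+ (enum_val i : 'I_#|F|)).
have rk : (0 < \rank (kermx A))%N by rewrite mxrank_ker; have := rank_leq_col A; lia.
have nz : kermx A != 0 by rewrite -mxrank_eq0 -lt0n.
have [i0 [j0 h0]] : exists i0 j0, kermx A i0 j0 != 0.
  case: (boolP [exists i0, exists j0, kermx A i0 j0 != 0]) => [/existsP [i0 /existsP [j0 h]]| /existsPn H].
    by exists i0, j0.
  exfalso; move/negP: nz; apply; apply/eqP/matrixP => i j.
  by move: (H i) => /existsPn /(_ j); rewrite negbK => /eqP ->; rewrite mxE.
pose u := row i0 (kermx A).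
have hu : u *m A = 0 by rewrite -row_mul mulmx_ker row0.
pose v (e : 'I_#|F|) := \sum_(i < #|W| | enum_val i == e) u 0 i.
exists v; split; [|split].
- exists (enum_val j0); rewrite /v (bigD1 j0) //= big1 ?addr0.
    by rewrite mxE.
  move=> i /andP [/eqP e ne]; exfalso; move: ne; rewrite (enum_val_inj e) eqxx //.
- move=> e he; rewrite /v big1 // => i /eqP ei; move: he; by rewrite -ei enum_valP.
- move=> x hx.
  have := congr1 (fun M : 'M_(1, #|Z|) => M 0 (enum_rank_in hx x)) hu.
  rewrite !mxE => ee; apply: etrans _ ee.
  rewrite [RHS](partition_big enum_val xpredT) //=.
  apply: eq_bigr => e _; rewrite /v mulr_suml.
  apply: eq_bigr => i /eqP ei; rewrite [A _ _]mxE enum_rankK_in // ei //.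
Qed.

Lemma poly_nonzero (F : finFieldType) (v : 'I_#|F| -> F) e0 : v e0 != 0 ->
  exists a : F, \sum_(e < #|F|) v e * a ^+ e != 0.
Proof.
move=> hv.
case: (boolP [exists a : F, \sum_(e < #|F|) v e * a ^+ e != 0]) => [/existsP //|/existsPn H].
exfalso.
pose Pp : {poly F} := \sum_(e < #|F|) v e *: 'X^e.
have hP : forall a, Pp.[a] = \sum_(e < #|F|) v e * a ^+ e.
  by move=> a; rewrite /Pp horner_sum; apply: eq_bigr => e _; rewrite hornerZ hornerXn.
have P0 : Pp = 0.
  apply: (@roots_geq_poly_eq0 _ _ (enum F)).
  - by apply/allP => t _; rewrite /root hP; move: (H t); rewrite negbK.
  - exact: enum_uniq.
  rewrite -cardE /Pp.
  apply: (big_ind (fun p : {poly F} => (size p <= #|F|)%N)).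
  - by rewrite size_poly0.
  - move=> p q hp hq; apply: leq_trans (size_polyD _ _) _.
    by rewrite geq_max hp hq.
  - move=> e _; apply: leq_trans (size_scale_leq _ _) _.
    by rewrite size_polyXn.
have : Pp`_e0 = v e0.
  rewrite /Pp coef_sum (bigD1 e0) //= coefZ coefXn eqxx mulr1 big1 ?addr0 //.
  move=> e ne; rewrite coefZ coefXn.
  have -> : (nat_of_ord e0 == nat_of_ord e) = false.
    by apply/negbTE; apply: contra ne => /eqP ee; apply/eqP/val_inj.
  by rewrite mulr0.
by rewrite P0 coef0 => /esym /eqP; rewrite (negbTE hv).
Qed.


Lemma UB (F : finFieldType) (m : nat) (Z : {set F}) :
  (1 <= m)%N -> #|F| = (2 ^ (2 * m))%N -> (2 * #|Z| < #|F|)%N ->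
  exists g : boolfun F, nonzero_bf g /\ (forall x, x \in Z -> g x = false) /\ alg_deg_le g m.
Proof.
move=> hm hN hZ.
have hW := @countW #|F| m hN.
set W := [set e : 'I_#|F| | _] in hW.
have hZW : (#|Z| < #|W|)%N by move: hW hZ; move: #|F| #|W| #|Z| => a b d; lia.
have [v [[e0 ve0] [vW vZ]]] := @linalg _ _ _ hZW.
have [a ha] := @poly_nonzero _ _ _ ve0.
have [t ht] := @Tr_nonzero F m hm hN.
pose P x := \sum_(e < #|F|) v e * x ^+ e.
pose lam := t / P a.
have ch : 2%N \in [pchar F] by apply: (card_finPcharP hN).
have T01 : forall y : F, Tr (2 * m)%N y = 0 \/ Tr (2 * m)%N y = 1.
  by move=> y; apply: Tr01; apply: Tr_sq.
pose g x := Tr (2 * m)%N (lam * P x) == 1.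
exists g; split; [|split].
- exists a; rewrite /g /lam divfK //.
  by case: (T01 t) => e; [move: ht; rewrite e eqxx | rewrite e eqxx].
- by move=> x hx; rewrite /g /P vZ // mulr0 Tr0 eq_sym oner_eq0.
have vdeg : forall e : 'I_#|F|, (m < wt e)%N -> v e = 0.
  by move=> e he; apply: vW; rewrite inE -ltnNge.
have [c [hc hrep]] := @trace_rep _ _ v lam hm hN vdeg.
exists c; split => // x.
rewrite -hrep -/(P x) /g.
by case: (T01 (lam * P x)) => ->; rewrite ?eqxx // eq_sym oner_eq0.
Qed.


Lemma keyeq (F : fieldType) (m : nat) (beta x y : F) (j j' : nat) :
  (1 <= m)%N -> (2 ^ m - 1).-primitive_root beta ->
  (j < 2 ^ m - 1)%N -> (j' < 2 ^ m - 1)%N ->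
  x ^+ (2 ^ m + 1) = 1 -> y ^+ (2 ^ m + 1) = 1 ->
  beta ^+ j * x = beta ^+ j' * y -> j = j'.
Proof.
move=> hm hb hj hj' hx hy e.
have e2 : beta ^+ (j * (2 ^ m + 1)) = beta ^+ (j' * (2 ^ m + 1)).
  have := congr1 (fun w => w ^+ (2 ^ m + 1)) e.
  by rewrite /= !exprMn hx hy !mulr1 -!exprM.
move/eqP: e2; rewrite (eq_prim_root_expr hb) => e3.
have co := @coprimeKM m hm.
clear e; wlog le : j j' hj hj' e3 / (j' <= j)%N.
  move=> W; case: (leqP j' j) => h; first exact: W.
  by symmetry; apply: W => //; [rewrite eq_sym | apply: ltnW].
rewrite eqn_mod_dvd ?leq_mul2r ?le ?orbT // -mulnBl Gauss_dvdl // in e3.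
case: (posnP (j - j')) => h; first lia.
have := dvdn_leq h e3; lia.
Qed.

Theorem theorem1 (m : nat) (F : finFieldType) (beta : F) :
  (1 <= m)%N ->
  #|F| = (2 ^ (2 * m))%N ->
  (* beta lies in the subfield F_{2^m} and is a primitive element of it *)
  beta ^+ (2 ^ m) = beta ->
  (2 ^ m - 1)%N.-primitive_root beta ->
  let U : {set F} := [set z : F | z ^+ (2 ^ m + 1) == 1] in
  let Delta : {set F} := [set beta ^+ (nat_of_ord i) | i : 'I_(2 ^ (m - 1))] in
  let Supp : {set F} := [set y * z | y in Delta, z in U] in
  alg_immunity_eq (fun x : F => x \in Supp) m.
Proof.
move=> hm hN _ hb U Delta Supp.
have hK : (0 < 2 ^ m - 1)%N by have := ltn_expl m (isT : (1 < 2)%N); lia.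
have hM : (0 < 2 ^ m + 1)%N by rewrite addn1.
have e2 : (2 ^ m = 2 * 2 ^ (m - 1))%N by rewrite -expnS; congr expn; lia.
have hq : (1 <= 2 ^ (m - 1))%N by rewrite expn_gt0.
have hFKM : #|F| = ((2 ^ m - 1) * (2 ^ m + 1)).+1.
  rewrite (@KM_eq m #|F| hN) subn1 prednK // hN expn_gt0 //.
have [zeta hz] := @exists_zeta F _ _ hFKM hK hM.
have bnz : beta != 0 := @prim_neq0 _ _ _ hK hb.
have znz : zeta != 0 := @prim_neq0 _ _ _ hM hz.
have zU : forall k, (zeta ^+ k) ^+ (2 ^ m + 1) = 1.
  by move=> k; rewrite exprAC (prim_expr_order hz) expr1n.
have memS1 : forall j k, (j < 2 ^ (m - 1))%N -> beta ^+ j * zeta ^+ k \in Supp.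
  move=> j k hj; apply: imset2_f; last by rewrite inE zU.
  by apply/imsetP; exists (Ordinal hj).
have memS : forall x, x \in Supp -> exists j z,
    [/\ (j < 2 ^ (m - 1))%N, z ^+ (2 ^ m + 1) = 1 & x = beta ^+ j * z].
  move=> x /imset2P [y z yD zU' ->].
  case/imsetP: yD => i _ ->.
  exists (nat_of_ord i), z; split; [exact: ltn_ord | by move: zU'; rewrite inE => /eqP | by []].
have notS0 : (0 : F) \notin Supp.
  apply/negP => /memS [j [z [_ hz1 e]]].
  have : beta ^+ j * z != 0.
    rewrite mulf_neq0 ?expf_neq0 //; apply/negP => /eqP z0.
    by move: hz1; rewrite z0 expr0n addn1 /= => /eqP; rewrite eq_sym oner_eq0.
  by rewrite -e eqxx.
have hjK : forall j, (j < 2 ^ (m - 1))%N -> (j < 2 ^ m - 1)%N.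
  by move=> j hj; lia.
split.
  have cS : (2 ^ (m - 1) * (2 ^ m + 1) <= #|Supp|)%N.
    pose h (p : 'I_(2 ^ (m - 1)) * 'I_(2 ^ m + 1)) := beta ^+ p.1 * zeta ^+ p.2.
    have injh : injective h.
      move=> [j k] [j' k'] /= e.
      have ejj := @keyeq F m beta _ _ j j' hm hb (hjK _ (ltn_ord j)) (hjK _ (ltn_ord j')) (zU k) (zU k') e.
      have ej : j = j' by apply: val_inj.
      rewrite ej in e *; move/(mulfI (expf_neq0 _ bnz)): e => /eqP.
      rewrite (eq_prim_root_expr hz) !modn_small // => /eqP ek.
      by congr pair; apply: val_inj.
    have sub : [set h p | p : 'I_(2 ^ (m - 1)) * 'I_(2 ^ m + 1)] \subset Supp.
      by apply/subsetP => x /imsetP [[j k] _ ->]; apply: memS1.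
    have := subset_leq_card sub.
    by rewrite card_imset // card_prod !card_ord.
  have hZ : (2 * #|~: Supp| < #|F|)%N.
    rewrite cardsCs setCK.
    move: cS; rewrite hN e2 mulnC expnM -[(2 ^ 2)%N]/(2 * 2)%N expnMn e2.
    move: #|Supp| (2 ^ (m - 1))%N hq => S q hq'; nia.
  have [g [gnz [gZ gdeg]]] := @UB F m (~: Supp) hm hN hZ.
  exists g; split => //; split => //; right => x /=.
  by case: (boolP (x \in Supp)) => //= hx; apply: gZ; rewrite inE hx.
move=> g d [[x0 gx0] hann] [c [hc hrep]].
rewrite leqNgt; apply/negP => hd.
have hdeg : forall i : 'I_#|F|, (m <= wt i)%N -> c i = 0.
  by move=> i hi; apply: hc; apply: leq_trans hd hi.
have gf : forall x, g x = false -> \sum_(i < #|F|) c i * x ^+ i = 0.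
  by move=> x gx; rewrite -hrep gx.
have call0 : forall i, c i = 0.
  case: hann => hann.
  - apply: (@LB_core F m beta zeta c 0 (2 ^ (m - 1)) false hm hN hb hz hdeg) => //.
      by rewrite subn0.
    move=> j k hj; rewrite add0n; apply: gf.
    by move: (hann (beta ^+ j * zeta ^+ k)); rewrite memS1.
  - apply: (@LB_core F m beta zeta c (2 ^ (m - 1)) (2 ^ (m - 1) - 1) true hm hN hb hz hdeg) => //.
      move=> i _ i0.
      have g0 : g 0 = false by move: (hann 0); rewrite (negbTE notS0).
      have := gf 0 g0.
      rewrite (bigD1 i) //= i0 expr0 mulr1 big1 ?addr0 //.
      move=> i' ne; rewrite expr0n.
      have -> : (nat_of_ord i' == 0%N) = false.
        by apply/negbTE; apply: contra ne => /eqP ee; apply/eqP/val_inj; rewrite /= ee i0.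
      by rewrite mulr0.
    move=> j k hj; apply: gf.
    have nS : beta ^+ (2 ^ (m - 1) + j) * zeta ^+ k \notin Supp.
      apply/negP => /memS [j' [z [hj' hz1 e]]].
      have := @keyeq F m beta _ _ _ j' hm hb _ (hjK _ hj') (zU k) hz1 e.
      have -> : ((2 ^ (m - 1) + j) < 2 ^ m - 1)%N = true by apply/idP; lia.
      move=> /(_ isT); lia.
    by move: (hann (beta ^+ (2 ^ (m - 1) + j) * zeta ^+ k)); rewrite (negbTE nS).
have := hrep x0; rewrite gx0 (eq_bigr (fun _ => 0)) ?big1 // => [/eqP|i _].
  by rewrite oner_eq0.
by rewrite call0 mul0r.
Qed.
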